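(* Let $G=(V,E)$ have positive edge weights $w$ with $w_e\le\lambda$ for all $e$, and let $OPT$ be the optimum of the bounded forest cover problem on $(G,w,\lambda)$. Define $w'_e=1$ if $w_e>\lambda/2$ and $w'_e=2w_e/\lambda$ otherwise, and let $OPT'$ be the minimum weighted index of a forest cover of $G$ with respect to $w'$. Then $OPT'\le 3\cdot OPT$.
   Context: Bounded forest cover: given a graph $G$ with positive edge weights $w$ and $\lambda\ge0$, find trees $T_1,\dots,T_k$ in $G$, each of total edge weight at most $\lambda$, such that $\bigcup_i V(T_i)$ is a vertex cover of $G$, minimizing $k$. A forest cover of $G$ is a forest $F\subseteq G$ (single-vertex trees allowed) whose vertex set is a vertex cover of $G$; with weights $w'$, its weighted index is $wi(F)=\sum_{e\in E(F)}w'_e+(\text{number of trees of }F)$. *)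

(* Defs.v *)
From mathcomp Require Import all_boot all_order all_algebra.
Set Implicit Arguments. Unset Strict Implicit. Unset Printing Implicit Defensive.
Import Order.TTheory GRing.Theory Num.Theory.
Local Open Scope ring_scope.

Section Graphs.
Variable T : finType.

Definition simple_graph (adj : rel T) : Prop := symmetric adj /\ irreflexive adj.

(* Edges are represented as 2-element vertex sets. *)
Definition edges (adj : rel T) : {set {set T}} :=
  [set [set x; y] | x in T, y in T & adj x y].

Definition erel (F : {set {set T}}) : rel T := fun x y => [set x; y] \in F.

Definition subgraph (adj : rel T) (S : {set T}) (F : {set {set T}}) : Prop :=
  F \subset edges adj /\ (forall f, f \in F -> f \subset S).

Definition acyclic (F : {set {set T}}) : Prop :=
  forall p : seq T, uniq p -> (3 <= size p)%N -> ~~ cycle (erel F) p.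

Definition connected_sub (S : {set T}) (F : {set {set T}}) : Prop :=
  forall x y, x \in S -> y \in S -> connect (erel F) x y.

Definition is_tree (adj : rel T) (S : {set T}) (F : {set {set T}}) : Prop :=
  [/\ subgraph adj S F, S != set0, connected_sub S F & acyclic F].

(* A forest of G (single-vertex trees allowed). *)
Definition is_forest (adj : rel T) (S : {set T}) (F : {set {set T}}) : Prop :=
  subgraph adj S F /\ acyclic F.

Definition vertex_cover (adj : rel T) (S : {set T}) : Prop :=
  forall x y, adj x y -> (x \in S) || (y \in S).

Definition n_components (S : {set T}) (F : {set {set T}}) : nat :=
  #|[set [set y in S | connect (erel F) x y] | x in S]|.

Definition forest_cover (adj : rel T) (S : {set T}) (F : {set {set T}}) : Prop :=
  is_forest adj S F /\ vertex_cover adj S.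

Definition weight (R : numDomainType) (w : {set T} -> R) (F : {set {set T}}) : R :=
  \sum_(f in F) w f.

Definition weighted_index (R : numDomainType) (w' : {set T} -> R)
  (S : {set T}) (F : {set {set T}}) : R :=
  weight w' F + (n_components S F)%:R.

Definition bfc_feasible (R : numDomainType) (adj : rel T) (w : {set T} -> R)
  (lambda : R) (k : nat) : Prop :=
  exists trees : 'I_k -> {set T} * {set {set T}},
    (forall i, is_tree adj (trees i).1 (trees i).2) /\
    (forall i, weight w (trees i).2 <= lambda) /\
    vertex_cover adj (\bigcup_(i < k) (trees i).1).

Definition bfc_opt (R : numDomainType) (adj : rel T) (w : {set T} -> R)
  (lambda : R) (k : nat) : Prop :=
  bfc_feasible adj w lambda k /\
  (forall k', bfc_feasible adj w lambda k' -> (k <= k')%N).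

Definition fc_opt (R : numDomainType) (adj : rel T) (w' : {set T} -> R) (r : R) : Prop :=
  (exists S F, forest_cover adj S F /\ weighted_index w' S F = r) /\
  (forall S F, forest_cover adj S F -> r <= weighted_index w' S F).

End Graphs.

Definition wprime (R : realFieldType) (T : finType) (w : {set T} -> R) (lambda : R)
  : {set T} -> R :=
  fun e => if lambda / 2 < w e then 1 else 2 * w e / lambda.

(* Main.v *)
Require Import Defs.
From mathcomp Require Import all_boot all_order all_algebra.
From mathcomp Require Import lra.
Import Order.TTheory GRing.Theory Num.Theory.
Local Open Scope ring_scope.

Set Implicit Arguments.
Section Aux.
Variable T : finType.

Lemma erel_sym (F : {set {set T}}) : symmetric (erel F).
Proof. by move=> x y; rewrite /erel setUC. Qed.

Lemma erel_connect_sym (F : {set {set T}}) : connect_sym (erel F).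
Proof. exact: sym_connect_sym (@erel_sym F). Qed.

Lemma connect_mono (F G : {set {set T}}) : F \subset G ->
  forall x y, connect (erel F) x y -> connect (erel G) x y.
Proof.
move=> FG x y; apply: connect_sub => a b /= H.
by apply: connect1; rewrite /erel (subsetP FG).
Qed.

Lemma sum_subset_le (R : numDomainType) (w : {set T} -> R) (F G : {set {set T}}) :
  F \subset G -> (forall f, f \in G -> 0 <= w f) -> weight w F <= weight w G.
Proof.
move=> FG w0; rewrite /weight (big_mkcond (fun f => f \in F)).
rewrite [X in _ <= X](big_mkcond (fun f => f \in G)) /=.
apply: ler_sum => f _; case: ifP => fF; first by rewrite (subsetP FG).
by case: ifP => // fG; apply: w0.
Qed.

Lemma sum_bigcup_le (R : numDomainType) (w : {set T} -> R) k
  (F : 'I_k -> {set {set T}}) :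
  (forall i f, f \in F i -> 0 <= w f) ->
  weight w (\bigcup_(i < k) F i) <= \sum_(i < k) weight w (F i).
Proof.
move=> w0; rewrite /weight.
have -> : \sum_(i < k) \sum_(f in F i) w f = \sum_f \sum_(i < k | f \in F i) w f.
  rewrite (eq_bigr (fun i => \sum_f (if f \in F i then w f else 0))); last first.
    by move=> i _; rewrite big_mkcond.
  rewrite exchange_big /=; apply: eq_bigr => f _; by rewrite [RHS]big_mkcond.
rewrite (big_mkcond (fun f => f \in _)) /=; apply: ler_sum => f _.
case: ifP => fU; last by apply: sumr_ge0 => i fi; apply: (w0 i).
case/bigcupP: fU => i _ fi.
rewrite (bigD1 i) //= lerDl; apply: sumr_ge0 => j /andP [fj _]; exact: (w0 j).
Qed.

End Aux.
Unset Implicit Arguments.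

Theorem mainTheorem10 (R : realFieldType) (T : finType) (adj : rel T)
  (w : {set T} -> R) (lambda : R) (OPT : nat) (OPT' : R) :
  simple_graph adj ->
  0 <= lambda ->
  (forall e, e \in edges adj -> 0 < w e) ->
  (forall e, e \in edges adj -> w e <= lambda) ->
  bfc_opt adj w lambda OPT ->
  fc_opt adj (wprime w lambda) OPT' ->
  OPT' <= 3 * OPT%:R.
Proof.
move=> _ l0 wpos wle [[trees [Htree [Hw Hcov]]] _] [_ Hopt].
set k := OPT in trees Htree Hw Hcov *.
set w' := wprime w lambda.
set S := \bigcup_(i < k) (trees i).1.
set U := \bigcup_(i < k) (trees i).2.
have w'0 : forall f, f \in edges adj -> 0 <= w' f.
  move=> f fe; rewrite /w' /wprime; case: ifP => // _.
  have lp : 0 < lambda by apply: lt_le_trans (wpos f fe) (wle f fe).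
  by apply: divr_ge0; [rewrite mulr_ge0 // ltW // wpos | exact: ltW].
have w'le : forall f, f \in edges adj -> w' f <= 2 * w f / lambda.
  move=> f fe; have lp : 0 < lambda by apply: lt_le_trans (wpos f fe) (wle f fe).
  rewrite /w' /wprime; case: ifP => // H.
  rewrite ler_pdivlMr // mul1r; move: H; rewrite ltr_pdivrMr // mulrC; exact: ltW.
have Ui : forall i, (trees i).2 \subset U by move=> i; apply: (bigcup_sup i).
have Si : forall i, (trees i).1 \subset S by move=> i; apply: (bigcup_sup i).
have Ei : forall i, (trees i).2 \subset edges adj by move=> i; case: (Htree i) => [[]].
have Uedges : U \subset edges adj.
  by apply/subsetP => f /bigcupP [i _ fi]; apply: (subsetP (Ei i)).
have wt_i : forall i, weight w' (trees i).2 <= 2.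
  move=> i; rewrite /weight.
  apply: (@le_trans _ _ (\sum_(f in (trees i).2) 2 * w f / lambda)).
    by apply: ler_sum => f fi; apply: w'le; apply: (subsetP (Ei i)).
  have [lp|ln] := ltrP 0 lambda.
    rewrite -mulr_suml -mulr_sumr ler_pdivrMr // ler_pM2l //; exact: Hw.
  have -> : lambda = 0 by apply/eqP; rewrite eq_le ln l0.
  by rewrite big1 // => f _; rewrite invr0 mulr0.
pose P := fun F : {set {set T}} => (F \subset U) &&
  [forall x, [forall y, connect (erel F) x y == connect (erel U) x y]].
have PU : P U by rewrite /P subxx /=; apply/forallP => x; apply/forallP => y.
case: (arg_minnP (fun F : {set {set T}} => #|F|) PU) => F /andP [FU /forallP Fc] Fmin.
have FcU : forall x y, connect (erel F) x y = connect (erel U) x y.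
  by move=> x y; move/forallP: (Fc x) => /(_ y) /eqP.
have acF : acyclic F.
  move=> p up sp; apply/negP => cyc.
  case: p up sp cyc => [|x [|y r]] //= up sp cyc.
  move: cyc => /andP [exy0 cyc]; have : path (erel F) x (rcons (y :: r) x) by rewrite /= exy0. rewrite rcons_path => /andP [pth ezx]; clear exy0 cyc.
  set z := last x (y :: r) in ezx.
  set e0 := [set z; x].
  set F' := F :\ e0.
  have [xyr yr] : x \notin y :: r /\ y \notin r.
    by case/andP: up => -> /andP [-> _].
  have zr : z \in r.
    have gen : forall r0 : seq T, (0 < size r0)%N -> last y r0 \in r0.
      by case=> // a r0 _ /=; exact: mem_last.
    by apply: gen; move: sp; case: (r).
  have pth' : path (erel F') x (y :: r).
    case/andP: pth => exy pyr; rewrite /=; apply/andP; split.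
      rewrite /erel in_setD1 (exy : [set x; y] \in F) andbT.
      apply/negP => /eqP H.
      have : y \in e0 by rewrite -H !inE eqxx orbT.
      rewrite !inE => /orP [/eqP yz|/eqP yx].
        by move: zr; rewrite -yz (negbTE yr).
      by move: xyr; rewrite yx inE eqxx.
    apply: (sub_in_path (P := predC1 x)) _ _ pyr.
      move=> a b /= ax bx; rewrite /erel in_setD1 => ->; rewrite andbT.
      apply/negP => /eqP H.
      have : x \in [set a; b] by rewrite H !inE eqxx orbT.
      by rewrite !inE (eq_sym x a) (eq_sym x b) (negbTE ax) (negbTE bx).
    by rewrite all_predC has_pred1.
  have cxz : connect (erel F') x z by apply/connectP; exists (y :: r).
  have eqc : forall a b, connect (erel F') a b = connect (erel F) a b.
    move=> a b; apply/idP/idP; first by apply: connect_mono; apply: subsetDl.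
    apply: connect_sub => c d cd.
    have [H|H] := eqVneq [set c; d] e0; last first.
      by apply: connect1; rewrite /erel in_setD1 H.
    have : c \in e0 by rewrite -H !inE eqxx.
    have : d \in e0 by rewrite -H !inE eqxx orbT.
    rewrite !inE => /orP [/eqP ->|/eqP ->] /orP [/eqP ->|/eqP ->] //.
    by rewrite erel_connect_sym.
  have PF' : P F'.
    rewrite /P (subset_trans (subsetDl _ _) FU) /=.
    by apply/forallP => a; apply/forallP => b; rewrite eqc FcU.
  have := Fmin F' PF'.
  by rewrite [X in (X <= _)%N](cardsD1 e0) (ezx : e0 \in F) ltnn.
have fc : forest_cover adj S F.
  split=> //; split=> //; split; first exact: subset_trans FU Uedges.
  move=> f /(subsetP FU) /bigcupP [i _ fi].
  case: (Htree i) => [[_ Hs] _ _ _].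
  exact: subset_trans (Hs f fi) (Si i).
have ncomp : (n_components S F <= k)%N.
  rewrite /n_components.
  pose C := fun x => [set y in S | connect (erel F) x y].
  pose g := fun i : 'I_k =>
    if [pick x in (trees i).1] is Some r then C r else set0.
  have sub : [set C x | x in S] \subset [set g i | i in 'I_k].
    apply/subsetP => _ /imsetP [x xS ->].
    case/bigcupP: (xS) => i _ xi; apply/imsetP; exists i => //.
    rewrite /g; case: pickP => [r ri|/(_ x)]; last by rewrite xi.
    have crx : connect (erel F) r x.
      case: (Htree i) => _ _ conn _.
      by rewrite FcU; apply: (connect_mono (Ui i)); apply: conn.
    apply/setP => y; rewrite !inE.
    by rewrite (same_connect (erel_connect_sym F) crx).
  apply: leq_trans (subset_leq_card sub) _.
  by apply: leq_trans (leq_imset_card _ _) _; rewrite card_ord.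
apply: le_trans (Hopt S F fc) _; rewrite /weighted_index.
have h1 : weight w' F <= 2 * k%:R.
  apply: (@le_trans _ _ (weight w' U)).
    by apply: sum_subset_le => // f fU; apply: w'0; apply: (subsetP Uedges).
  apply: (@le_trans _ _ (\sum_(i < k) weight w' (trees i).2)).
    by apply: sum_bigcup_le => i f fi; apply: w'0; apply: (subsetP (Ei i)).
  apply: (@le_trans _ _ (\sum_(i < k) (2 : R))).
    by apply: ler_sum => i _; apply: wt_i.
  by rewrite sumr_const card_ord mulr_natr.
have h2 : (n_components S F)%:R <= k%:R :> R by rewrite ler_nat.
lra.
Qed.
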